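(* Let $n\ge 2$, $h=1/n$, and for $0\le i\le n$ let $\tau_i=-2\sin\frac{i\pi}{2n}$ and $\sigma_i=2\big(2+\cos\frac{i\pi}{n}\big)$. Let $A,D\in\mathbb{R}^{(n-1)\times(n-1)}$ be the tridiagonal matrices with $A_{k,k}=2$, $A_{k,k\pm1}=-1$ and $D_{k,k}=4$, $D_{k,k\pm1}=1$ (other entries zero), and let $B\in\mathbb{R}^{(n-1)\times n}$ have entries $B_{k,k}=-1$, $B_{k,k+1}=1$ ($1\le k\le n-1$), other entries zero. For $0\le j\le n-1$ let $\bm s_j=\big(\sin\frac{j\pi}{n},\dots,\sin\frac{(n-1)j\pi}{n}\big)^{\mathsf T}\in\mathbb{R}^{n-1}$ (so $\bm s_0=\bm 0$) and $\bm c_j=\nu_j\big(\cos\frac{j\pi}{2n},\cos\frac{3j\pi}{2n},\dots,\cos\frac{(2n-1)j\pi}{2n}\big)^{\mathsf T}\in\mathbb{R}^{n}$, with $\nu_0=\frac1{\sqrt2}$ and $\nu_j=1$ for $j\ge1$. Consider the discrete eigenvalue problem: find $\lambda\in\mathbb{R}$ and $(U,V)\in\mathbb{R}^{n\times(n-1)}\times\mathbb{R}^{(n-1)\times n}$, $(U,V)\neq(0,0)$, with $$UA-B^{\mathsf T}VB^{\mathsf T}=\tfrac{h^2}{6}\lambda\,UD,\qquad -BUB+AV=\tfrac{h^2}{6}\lambda\,DV.$$ Then this problem has the following $2n(n-1)$ eigen-solutions, whose eigenvectors $(U,V)$ form a basis of $\mathbb{R}^{n\times(n-1)}\times\mathbb{R}^{(n-1)\times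 n}$ (a complete eigen-decomposition): (i) $n^2-1$ eigen-solutions satisfying the discrete divergence-free constraint $BUD+DVB^{\mathsf T}=0$: $$\lambda_{i,j}=\frac{6}{h^2}\Big(\frac{\tau_i^2}{\sigma_i}+\frac{\tau_j^2}{\sigma_j}\Big),\quad U_{i,j}=\tau_j\sigma_i\,\bm c_i\bm s_j^{\mathsf T},\quad V_{i,j}=-\tau_i\sigma_j\,\bm s_i\bm c_j^{\mathsf T},$$ for $0\le i,j\le n-1$, $(i,j)\neq(0,0)$; (ii) $(n-1)^2$ (discrete curl-free) eigen-solutions with eigenvalue $0$: $$\lambda=0,\quad U^0_{i,j}=\tau_i\,\bm c_i\bm s_j^{\mathsf T},\quad V^0_{i,j}=\tau_j\,\bm s_i\bm c_j^{\mathsf T},\qquad 1\le i,j\le n-1.$$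
   Context: This is the algebraic form of the lowest-order rectangular Nédélec edge-element discretization of the Maxwell eigenvalue problem $\mathrm{curl}\,\mathrm{rot}\,\bm u=\lambda\bm u$ on $[0,1]^2$ with $\bm u\times\bm n=0$ on the boundary, on a uniform $n\times n$ mesh. For column vectors $\bm a,\bm b$, $\bm a\bm b^{\mathsf T}$ denotes the outer product (written $\bm a\otimes\bm b^{\mathsf T}$ in the paper). *)

(* Defs.v *)
From HB Require Import structures.
From mathcomp Require Import all_boot all_order all_algebra.
From mathcomp Require Import all_classical all_reals.
From mathcomp Require Import trigo.
Set Implicit Arguments. Unset Strict Implicit. Unset Printing Implicit Defensive.
Import Order.TTheory GRing.Theory Num.Theory.
Local Open Scope ring_scope.

(* Indices are 0-based: paper index k (1 <= k <= n-1) is Rocq index k-1. *)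
Section Defs.
Variable R : realType.
Variable n : nat.

Definition hstep : R := 1 / n%:R.
Definition tau (i : nat) : R := - 2 * sin (i%:R * pi / (2 * n%:R)).
Definition sigma (i : nat) : R := 2 * (2 + cos (i%:R * pi / n%:R)).

Definition Amx : 'M[R]_(n.-1) :=
  \matrix_(k, l) (if (k : nat) == l then 2
                  else if ((k.+1 == l) || (l.+1 == k))%N then -1 else 0).
Definition Dmx : 'M[R]_(n.-1) :=
  \matrix_(k, l) (if (k : nat) == l then 4
                  else if ((k.+1 == l) || (l.+1 == k))%N then 1 else 0).
Definition Bmx : 'M[R]_(n.-1, n) :=
  \matrix_(k, l) (if (l : nat) == k then -1
                  else if (l : nat) == k.+1 then 1 else 0).

Definition svec (j : nat) : 'cV[R]_(n.-1) :=
  \col_k sin ((k.+1)%:R * j%:R * pi / n%:R).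
Definition nu (j : nat) : R := if j == 0%N then 1 / Num.sqrt 2 else 1.
Definition cvec (j : nat) : 'cV[R]_n :=
  \col_k (nu j * cos ((k.*2.+1)%:R * j%:R * pi / (2 * n%:R))).

Definition is_eigsol (lam : R) (U : 'M[R]_(n, n.-1)) (V : 'M[R]_(n.-1, n)) :=
  (U != 0 \/ V != 0) /\
  U *m Amx - Bmx^T *m V *m Bmx^T = (hstep ^+ 2 / 6 * lam) *: (U *m Dmx) /\
  - (Bmx *m U *m Bmx) + Amx *m V = (hstep ^+ 2 / 6 * lam) *: (Dmx *m V).

Definition div_free (U : 'M[R]_(n, n.-1)) (V : 'M[R]_(n.-1, n)) :=
  Bmx *m U *m Dmx + Dmx *m V *m Bmx^T = 0.

Definition lam_ij (i j : nat) : R :=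
  6 / hstep ^+ 2 * (tau i ^+ 2 / sigma i + tau j ^+ 2 / sigma j).
Definition U_ij (i j : nat) : 'M[R]_(n, n.-1) :=
  (tau j * sigma i) *: (cvec i *m (svec j)^T).
Definition V_ij (i j : nat) : 'M[R]_(n.-1, n) :=
  (- (tau i * sigma j)) *: (svec i *m (cvec j)^T).
Definition U0_ij (i j : nat) : 'M[R]_(n, n.-1) :=
  tau i *: (cvec i *m (svec j)^T).
Definition V0_ij (i j : nat) : 'M[R]_(n.-1, n) :=
  tau j *: (svec i *m (cvec j)^T).

(* Index set of all 2n(n-1) eigen-solutions: inl (i,j) with 0<=i,j<=n-1,
   (i,j) <> (0,0), for family (i); inr (i',j') with paper indices
   i = i'+1, j = j'+1 in 1..n-1, for family (ii). *)
Definition Idx := (('I_n * 'I_n) + ('I_(n.-1) * 'I_(n.-1)))%type.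
Definition idx_ok (k : Idx) : bool :=
  match k with
  | inl p => ((p.1 : nat) != 0%N) || ((p.2 : nat) != 0%N)
  | inr _ => true
  end.
Definition Ufam (k : Idx) : 'M[R]_(n, n.-1) :=
  match k with
  | inl p => U_ij p.1 p.2
  | inr p => U0_ij (p.1).+1 (p.2).+1
  end.
Definition Vfam (k : Idx) : 'M[R]_(n.-1, n) :=
  match k with
  | inl p => V_ij p.1 p.2
  | inr p => V0_ij (p.1).+1 (p.2).+1
  end.

End Defs.

Definition is_basis_pairs (R : fieldType) (m p : nat) (I : finType) (P : pred I)
    (U : I -> 'M[R]_(m, p)) (V : I -> 'M[R]_(p, m)) : Prop :=
  (forall a : I -> R,
      \sum_(k | P k) a k *: U k = 0 -> \sum_(k | P k) a k *: V k = 0 ->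
      forall k, P k -> a k = 0) /\
  (forall (U1 : 'M[R]_(m, p)) (V1 : 'M[R]_(p, m)), exists a : I -> R,
      U1 = \sum_(k | P k) a k *: U k /\ V1 = \sum_(k | P k) a k *: V k).

(* Main.v *)
Require Import Defs.
From HB Require Import structures.
From mathcomp Require Import all_boot all_order all_algebra.
From mathcomp Require Import all_classical all_reals.
From mathcomp Require Import trigo.
From mathcomp Require Import ring lra zify.
Import Order.TTheory GRing.Theory Num.Theory.
Local Open Scope ring_scope.


Lemma sum_delta (R : pzRingType) (N m : nat) (F : nat -> R) :
  \sum_(l < N) (if (l : nat) == m then F l else 0) = if (m < N)%N then F m else 0.
Proof.
case: ltnP => h.
  rewrite (bigD1 (Ordinal h)) //= eqxx big1 ?addr0 // => l hl.
  case: eqP => // e; exfalso; move: hl; apply/negP; rewrite negbK; apply/eqP/val_inj => /=; exact: e.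
apply: big1 => l _; case: eqP => // e; have := ltn_ord l; rewrite e; lia.
Qed.

Lemma tri_entry (R : pzRingType) (a b : R) (k l : nat) :
  (if k == l then a else if (k.+1 == l) || (l.+1 == k) then b else 0) =
  (if l == k then a else 0) + (if l == k.+1 then b else 0) + (if l.+1 == k then b else 0).
Proof.
have [->|nkl] := eqVneq k l.
  by rewrite ltn_eqF // gtn_eqF // !addr0.
rewrite add0r.
have [<-|h2] := eqVneq k.+1 l.
  by rewrite /= gtn_eqF ?addr0.
by rewrite add0r /=.
Qed.

Lemma if_mul0 (R : pzRingType) (P : bool) (x y : R) :
  (if P then x else 0) * y = if P then x * y else 0.
Proof. by case: P; rewrite ?mul0r. Qed.

Lemma tri_mul (R : pzRingType) (N : nat) (a b : R) (f : nat -> R) (f0 : f 0%N = 0)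
  (fN : f N.+1 = 0) (k : 'I_N) :
  \sum_(l < N) (if (k : nat) == l then a else if (k.+1 == l) || (l.+1 == k) then b else 0) * f l.+1
  = a * f k.+1 + b * (f k + f k.+2).
Proof.
under eq_bigr => l _ do rewrite tri_entry !mulrDl !if_mul0.
rewrite !big_split /= mulrDr addrA.
rewrite (sum_delta _ N k (fun l => a * f l.+1)) (sum_delta _ N k.+1 (fun l => b * f l.+1)) ltn_ord -[in RHS]addrA [in RHS](addrC (b * f k)) addrA; congr (_ + _ + _).
  case: ltnP => // h.
  have -> : k.+2 = N.+1 by have := ltn_ord k; lia.
  by rewrite fN mulr0.
case: k => [[|k] hk] /=.
  by rewrite f0 mulr0 big1 // => l _.
under eq_bigr => l _ do rewrite eqSS.
by rewrite (sum_delta _ N k (fun l => b * f l.+1)) (ltn_trans _ hk).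
Qed.

Lemma B_entry (R : pzRingType) (l k : nat) :
  (if l == k then -1 else if l == k.+1 then 1 else 0) =
  (if k == l then -1 else 0) + (if k.+1 == l then 1 else 0) :> R.
Proof.
have [->|nkl] := eqVneq l k; first by rewrite gtn_eqF // addr0.
by rewrite add0r eq_sym.
Qed.

Lemma BT_mul (R : pzRingType) (N : nat) (f : nat -> R) (f0 : f 0%N = 0)
  (fN : f N.+1 = 0) (l : 'I_N.+1) :
  \sum_(k < N) (if (l : nat) == k then -1 else if (l : nat) == k.+1 then 1 else 0) * f k.+1
  = f l - f l.+1.
Proof.
under eq_bigr => k _ do rewrite B_entry mulrDl !if_mul0.
rewrite big_split /= (sum_delta _ N l (fun k => -1 * f k.+1)) addrC.
congr (_ + _); last first.
  case: ltnP => h; first by rewrite mulN1r.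
  have -> : (l : nat) = N by have := ltn_ord l; lia.
  by rewrite fN oppr0.
case: l => [[|l] hl] /=.
  by rewrite f0 big1 // => k _.
under eq_bigr => k _ do rewrite eqSS.
by rewrite (sum_delta _ N l (fun k => 1 * f k.+1)) -ltnS hl mul1r.
Qed.

Lemma B_mul (R : pzRingType) (N : nat) (g : nat -> R) (k : 'I_N) :
  \sum_(l < N.+1) (if (l : nat) == k then -1 else if (l : nat) == k.+1 then 1 else 0) * g l
  = g k.+1 - g k.
Proof.
under eq_bigr => l _ do rewrite B_entry mulrDl !if_mul0 [(k : nat) == l]eq_sym [k.+1 == l]eq_sym.
rewrite big_split /= (sum_delta _ N.+1 k (fun l => -1 * g l)) (sum_delta _ N.+1 k.+1 (fun l => 1 * g l)).
rewrite (ltn_trans (ltn_ord k)) // ltnS (ltn_ord k).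
by rewrite mulN1r mul1r addrC.
Qed.


Lemma natS1 (R : pzRingType) (l : nat) : l.+1%:R = l%:R + 1 :> R.
Proof. by rewrite natr1. Qed.
Lemma natS2 (R : pzRingType) (l : nat) : (l.*2.+1)%:R = 2 * l%:R + 1 :> R.
Proof. by rewrite natS1 -mul2n natrM. Qed.

Lemma sin_natpi (R : realType) (j : nat) : sin (j%:R * pi) = 0 :> R.
Proof.
elim: j => [|j IH]; first by rewrite mul0r sin0.
by rewrite -natr1 mulrDl mul1r sinDpi IH oppr0.
Qed.

Lemma nu_tau (R : realType) (N j : nat) : nu R j * tau R N j = tau R N j.
Proof.
rewrite /nu /tau; case: eqP => [->|_]; last by rewrite mul1r.
by rewrite !(mul0r, sin0, mulr0).
Qed.

Lemma A_svec (R : realType) (N j : nat) :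
  Amx R N.+1 *m svec R N.+1 j = tau R N.+1 j ^+ 2 *: svec R N.+1 j.
Proof.
apply/matrixP => k z; rewrite ord1 !mxE.
under eq_bigr => l _ do rewrite !mxE.
set x : R := j%:R * pi / N.+1%:R.
have fE m : sin (m%:R * j%:R * pi / N.+1%:R) = sin (m%:R * x) :> R by rewrite /x !mulrA.
rewrite (@tri_mul _ _ _ _ (fun m => sin (m%:R * j%:R * pi / N.+1%:R))) /=; first last.
- rewrite (_ : N.+1%:R * j%:R * pi / N.+1%:R = j%:R * pi) ?sin_natpi //.
  by field; rewrite ?(addrC 1) natr1 pnatr_eq0.
- by rewrite !mul0r sin0.
rewrite !fE.
set y := k.+1%:R * x.
have -> : k%:R * x = y - x by rewrite /y -natr1; ring.
have -> : k.+2%:R * x = y + x by rewrite /y -(@natr1 R k.+1); ring.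
rewrite /tau.
have -> : j%:R * pi / (2 * N.+1%:R) = x / 2 :> R.
  by rewrite /x; field; rewrite ?(addrC 1) natr1 pnatr_eq0.
have hx : x = (x / 2) *+ 2 by rewrite mulr2n -splitr.
have cx : cos x = 1 - 2 * sin (x / 2) ^+ 2.
  by rewrite {1}hx cos_mulr2n cos2sin2; ring.
rewrite sinB sinD cx; ring.
Qed.

Lemma D_svec (R : realType) (N j : nat) :
  Dmx R N.+1 *m svec R N.+1 j = sigma R N.+1 j *: svec R N.+1 j.
Proof.
apply/matrixP => k z; rewrite ord1 !mxE.
under eq_bigr => l _ do rewrite !mxE.
set x : R := j%:R * pi / N.+1%:R.
have fE m : sin (m%:R * j%:R * pi / N.+1%:R) = sin (m%:R * x) :> R by rewrite /x !mulrA.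
rewrite (@tri_mul _ _ _ _ (fun m => sin (m%:R * j%:R * pi / N.+1%:R))) /=; first last.
- rewrite (_ : N.+1%:R * j%:R * pi / N.+1%:R = j%:R * pi) ?sin_natpi //.
  by field; rewrite ?(addrC 1) natr1 pnatr_eq0.
- by rewrite !mul0r sin0.
rewrite !fE.
set y := k.+1%:R * x.
have -> : k%:R * x = y - x by rewrite /y -natr1; ring.
have -> : k.+2%:R * x = y + x by rewrite /y -(@natr1 R k.+1); ring.
rewrite /sigma -/x sinB sinD; ring.
Qed.

Lemma BT_svec (R : realType) (N j : nat) :
  (Bmx R N.+1)^T *m svec R N.+1 j = tau R N.+1 j *: cvec R N.+1 j.
Proof.
apply/matrixP => l z; rewrite ord1 !mxE.
under eq_bigr => k _ do rewrite !mxE.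
set x : R := j%:R * pi / N.+1%:R.
have fE m : sin (m%:R * j%:R * pi / N.+1%:R) = sin (m%:R * x) :> R by rewrite /x !mulrA.
rewrite (@BT_mul _ _ (fun m => sin (m%:R * j%:R * pi / N.+1%:R))) /=; first last.
- rewrite (_ : N.+1%:R * j%:R * pi / N.+1%:R = j%:R * pi) ?sin_natpi //.
  by field; rewrite ?(addrC 1) natr1 pnatr_eq0.
- by rewrite !mul0r sin0.
rewrite !fE mulrA (mulrC (tau _ _ _)) nu_tau /tau.
have -> : j%:R * pi / (2 * N.+1%:R) = x / 2 :> R.
  by rewrite /x; field; rewrite ?(addrC 1) natr1 pnatr_eq0.
set w := (l.*2.+1)%:R * (x / 2).
have -> : (l.*2.+1)%:R * j%:R * pi / (2 * N.+1%:R) = w :> R.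
  by rewrite /w /x; field; rewrite ?(addrC 1) natr1 pnatr_eq0.
have -> : l%:R * x = w - x / 2 by rewrite /w natS2; field.
have -> : l.+1%:R * x = w + x / 2 by rewrite /w natS2 natS1; field.
rewrite sinB sinD; ring.
Qed.

Lemma B_cvec (R : realType) (N j : nat) :
  Bmx R N.+1 *m cvec R N.+1 j = tau R N.+1 j *: svec R N.+1 j.
Proof.
apply/matrixP => k z; rewrite ord1 !mxE.
under eq_bigr => l _ do rewrite !mxE.
rewrite (@B_mul _ _ (fun l => nu R j * cos ((l.*2.+1)%:R * j%:R * pi / (2 * N.+1%:R)))) /=.
rewrite -mulrBr -(nu_tau R N.+1 j) -[in RHS]mulrA; congr (_ * _).
case: k => k hk /=.
set x : R := j%:R * pi / N.+1%:R.
rewrite /tau.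
have -> : j%:R * pi / (2 * N.+1%:R) = x / 2 :> R.
  by rewrite /x; field; rewrite ?(addrC 1) natr1 pnatr_eq0.
set y := k.+1%:R * x.
have -> : k.+1%:R * j%:R * pi / N.+1%:R = y by rewrite /y /x !mulrA.
have -> : (k.+1.*2.+1)%:R * j%:R * pi / (2 * N.+1%:R) = y + x / 2 :> R.
  by rewrite /y /x !natS2 !natS1; field; rewrite ?(addrC 1) natr1 pnatr_eq0.
have -> : (k.*2.+1)%:R * j%:R * pi / (2 * N.+1%:R) = y - x / 2 :> R.
  by rewrite /y /x !natS2 !natS1; field; rewrite ?(addrC 1) natr1 pnatr_eq0.
rewrite cosB cosD; ring.
Qed.


Lemma trZ (R : pzRingType) m p (a : R) (M : 'M[R]_(m, p)) : (a *: M)^T = a *: M^T.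
Proof. by apply/matrixP => i j; rewrite !mxE. Qed.

Lemma Atr (R : realType) N : (Amx R N)^T = Amx R N.
Proof.
apply/matrixP => i j; rewrite !mxE eq_sym; congr (if _ then _ else _).
by rewrite orbC.
Qed.

Lemma Dtr (R : realType) N : (Dmx R N)^T = Dmx R N.
Proof.
apply/matrixP => i j; rewrite !mxE eq_sym; congr (if _ then _ else _).
by rewrite orbC.
Qed.

Lemma mulr_outer (R : comPzRingType) p q r (c : 'cV[R]_p) (s : 'cV[R]_q) (M : 'M[R]_(q, r)) :
  (c *m s^T) *m M = c *m (M^T *m s)^T.
Proof. by rewrite trmx_mul trmxK mulmxA. Qed.

Lemma mul3_outer (R : comPzRingType) p q r t (M : 'M[R]_(r, p)) (s : 'cV[R]_p) (c : 'cV[R]_q) (K : 'M[R]_(q, t)) :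
  M *m (s *m c^T) *m K = (M *m s) *m (K^T *m c)^T.
Proof. by rewrite trmx_mul trmxK !mulmxA. Qed.

Lemma outer_sc (R : comPzRingType) p q (a b : R) (c : 'cV[R]_p) (s : 'cV[R]_q) :
  (a *: c) *m (b *: s)^T = (a * b) *: (c *m s^T).
Proof. by rewrite trZ -scalemxAl -scalemxAr scalerA. Qed.

Lemma eq1 (R : realType) N (a b : R) i j :
  (a *: (cvec R N.+1 i *m (svec R N.+1 j)^T)) *m Amx R N.+1 - (Bmx R N.+1)^T *m (b *: (svec R N.+1 i *m (cvec R N.+1 j)^T)) *m (Bmx R N.+1)^T =
  (a * tau R N.+1 j ^+ 2 - b * (tau R N.+1 i * tau R N.+1 j)) *: (cvec R N.+1 i *m (svec R N.+1 j)^T).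
Proof.
rewrite -scalemxAl mulr_outer Atr A_svec.
rewrite -scalemxAr -scalemxAl mul3_outer trmxK BT_svec B_cvec outer_sc.
rewrite trZ -scalemxAr scalerA scalerA scalerBl; congr (_ - _); congr (_ *: _); ring.
Qed.

Lemma eqD1 (R : realType) N (a : R) i j :
  (a *: (cvec R N.+1 i *m (svec R N.+1 j)^T)) *m Dmx R N.+1 =
  (a * sigma R N.+1 j) *: (cvec R N.+1 i *m (svec R N.+1 j)^T).
Proof.
by rewrite -scalemxAl mulr_outer Dtr D_svec trZ -scalemxAr scalerA.
Qed.

Lemma eq2 (R : realType) N (a b : R) i j :
  - (Bmx R N.+1 *m (a *: (cvec R N.+1 i *m (svec R N.+1 j)^T)) *m Bmx R N.+1) + Amx R N.+1 *m (b *: (svec R N.+1 i *m (cvec R N.+1 j)^T)) =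
  (b * tau R N.+1 i ^+ 2 - a * (tau R N.+1 i * tau R N.+1 j)) *: (svec R N.+1 i *m (cvec R N.+1 j)^T).
Proof.
rewrite -!scalemxAr -!scalemxAl mul3_outer B_cvec BT_svec outer_sc.
rewrite mulmxA A_svec -scalemxAl.
rewrite !scalerA scalerBl addrC; congr (_ - _); congr (_ *: _); ring.
Qed.

Lemma eqD2 (R : realType) N (b : R) i j :
  Dmx R N.+1 *m (b *: (svec R N.+1 i *m (cvec R N.+1 j)^T)) =
  (b * sigma R N.+1 i) *: (svec R N.+1 i *m (cvec R N.+1 j)^T).
Proof.
by rewrite -scalemxAr mulmxA D_svec -scalemxAl scalerA mulrC.
Qed.

Lemma eqdiv (R : realType) N (a b : R) i j :
  Bmx R N.+1 *m (a *: (cvec R N.+1 i *m (svec R N.+1 j)^T)) *m Dmx R N.+1 + Dmx R N.+1 *m (b *: (svec R N.+1 i *m (cvec R N.+1 j)^T)) *m (Bmx R N.+1)^T =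
  (a * tau R N.+1 i * sigma R N.+1 j + b * sigma R N.+1 i * tau R N.+1 j) *: (svec R N.+1 i *m (svec R N.+1 j)^T).
Proof.
rewrite -!scalemxAr -!scalemxAl !mul3_outer trmxK Dtr !B_cvec !D_svec outer_sc outer_sc.
rewrite !scalerA -scalerDl; congr (_ *: _); ring.
Qed.


Lemma sigma_gt0 (R : realType) n i : 0 < sigma R n i.
Proof. rewrite /sigma; have h := @cos_geN1 R (i%:R * pi / n%:R); lra. Qed.

Lemma sigma_neq0 (R : realType) n i : sigma R n i != 0.
Proof. by rewrite gt_eqF // sigma_gt0. Qed.

Lemma ang_bounds (R : realType) (n i : nat) : (i < n)%N ->
  0 <= i%:R * (pi : R) / (2 * n%:R) < pi / 2.
Proof.
move=> hi; have pi0 := pi_gt0 R.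
have n0 : 0 < n%:R :> R by rewrite ltr0n; lia.
have hin : i%:R < n%:R :> R by rewrite ltr_nat.
apply/andP; split.
  by rewrite divr_ge0 ?mulr_ge0 ?ler0n ?(ltW pi0) // mulr_ge0 // ltW.
rewrite ltr_pdivrMr ?mulr_gt0 //.
rewrite (_ : pi / 2 * (2 * n%:R) = n%:R * pi); last by field.
by rewrite ltr_pM2r.
Qed.

Lemma tau_sq (R : realType) n i : tau R n i ^+ 2 = 4 * sin (i%:R * pi / (2 * n%:R)) ^+ 2.
Proof. rewrite /tau; ring. Qed.

Lemma tau2_lt (R : realType) (n i i' : nat) : (i < i')%N -> (i' < n)%N ->
  tau R n i ^+ 2 < tau R n i' ^+ 2.
Proof.
move=> hii' hi'; rewrite !tau_sq.
have hi : (i < n)%N by lia.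
have /andP[a0 a1] := ang_bounds R n i hi.
have /andP[b0 b1] := ang_bounds R n i' hi'.
have pi0 := pi_gt0 R.
have lt : i%:R * pi / (2 * n%:R) < i'%:R * pi / (2 * n%:R) :> R.
  rewrite ltr_pM2r ?invr_gt0 ?mulr_gt0 ?ltr0n //; last by lia.
  by rewrite ltr_pM2r // ltr_nat.
have : sin (i%:R * pi / (2 * n%:R)) < sin (i'%:R * pi / (2 * n%:R)) :> R.
  rewrite ltr_sin // in_itv /=; apply/andP; split; lra.
have : 0 <= sin (i%:R * pi / (2 * n%:R)) :> R.
  apply: sin_ge0_pi; apply/andP; split; lra.
nra.
Qed.

Lemma tau_neq0 (R : realType) (n i : nat) : (0 < i)%N -> (i < n)%N -> tau R n i != 0.
Proof.
move=> h0 h1; have := @tau2_lt R n 0 i h0 h1.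
rewrite /tau !(mul0r, sin0, mulr0, expr0n) /=.
by apply: contraTneq => ->; rewrite expr0n /= ltxx.
Qed.

Lemma tau0 (R : realType) n : tau R n 0 = 0.
Proof. by rewrite /tau !(mul0r, sin0, mulr0). Qed.

Lemma svec0 (R : realType) n : svec R n 0 = 0.
Proof. by apply/matrixP => i j; rewrite !mxE !(mulr0, mul0r, sin0). Qed.

Lemma svec_pos (R : realType) (n j : nat) (k : 'I_n.-1) : (k : nat) = 0%N ->
  (0 < j)%N -> (j < n)%N -> 0 < svec R n j k 0.
Proof.
move=> hk h0 h1; rewrite mxE hk mul1r.
have pi0 := pi_gt0 R.
apply: sin_gt0_pi; apply/andP; split.
  by rewrite divr_gt0 ?mulr_gt0 ?ltr0n //; lia.
rewrite ltr_pdivrMr ?ltr0n; last by lia.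
by rewrite mulrC ltr_pM2l // ltr_nat.
Qed.

Lemma cvec_pos (R : realType) (n j : nat) (k : 'I_n) : (k : nat) = 0%N ->
  (j < n)%N -> 0 < cvec R n j k 0.
Proof.
move=> hk h1; rewrite mxE hk mul1r.
apply: mulr_gt0.
  rewrite /nu; case: eqP => _ //; rewrite div1r invr_gt0 sqrtr_gt0; lra.
have /andP[a0 a1] := ang_bounds R n j h1.
apply: cos_gt0_pihalf; apply/andP; split; last by [].
have := pi_gt0 R; lra.
Qed.


Lemma unit_of_orth (R : realType) p (M : 'M[R]_p)
  (h1 : forall j j' : 'I_p, j != j' -> (M^T *m M) j j' = 0)
  (h2 : forall j, (M^T *m M) j j != 0) : M \in unitmx.
Proof.
have e : M^T *m M = diag_mx (\row_j (M^T *m M) j j).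
  apply/matrixP => j j'; rewrite [in RHS]mxE [in RHS]mxE.
  have [->|ne] := eqVneq j j'; first by rewrite mulr1n.
  by rewrite mulr0n h1.
have : M^T *m M \in unitmx.
  rewrite unitmxE e det_diag unitfE; apply/prodf_neq0 => j _; rewrite mxE; exact: h2.
by rewrite unitmx_mul => /andP[].
Qed.

Lemma s_orth (R : realType) N (j j' : nat) :
  tau R N.+1 j ^+ 2 != tau R N.+1 j' ^+ 2 -> (svec R N.+1 j)^T *m svec R N.+1 j' = 0.
Proof.
move=> ne.
have e : (tau R N.+1 j ^+ 2 - tau R N.+1 j' ^+ 2) *: ((svec R N.+1 j)^T *m svec R N.+1 j') = 0.
  rewrite scalerBl scalemxAl -trZ -A_svec scalemxAr -A_svec.
  by rewrite trmx_mul Atr mulmxA subrr.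
by move/eqP: e; rewrite scalemx_eq0 subr_eq0 (negbTE ne) /= => /eqP.
Qed.

Lemma BTB_cvec (R : realType) N j :
  ((Bmx R N.+1)^T *m Bmx R N.+1) *m cvec R N.+1 j = tau R N.+1 j ^+ 2 *: cvec R N.+1 j.
Proof. by rewrite -mulmxA B_cvec -scalemxAr BT_svec scalerA. Qed.

Lemma c_orth (R : realType) N (j j' : nat) :
  tau R N.+1 j ^+ 2 != tau R N.+1 j' ^+ 2 -> (cvec R N.+1 j)^T *m cvec R N.+1 j' = 0.
Proof.
move=> ne.
have e : (tau R N.+1 j ^+ 2 - tau R N.+1 j' ^+ 2) *: ((cvec R N.+1 j)^T *m cvec R N.+1 j') = 0.
  rewrite scalerBl scalemxAl -trZ -BTB_cvec scalemxAr -BTB_cvec.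
  by rewrite trmx_mul trmx_mul trmxK !mulmxA subrr.
by move/eqP: e; rewrite scalemx_eq0 subr_eq0 (negbTE ne) /= => /eqP.
Qed.

Definition Sm (R : realType) N : 'M[R]_N := \matrix_(k, j) svec R N.+1 j.+1 k 0.
Definition Cm (R : realType) N : 'M[R]_N.+1 := \matrix_(k, j) cvec R N.+1 j k 0.

Lemma tau2_neq (R : realType) (n i i' : nat) : i != i' -> (i < n)%N -> (i' < n)%N ->
  tau R n i ^+ 2 != tau R n i' ^+ 2.
Proof.
move=> ne hi hi'; case: (ltngtP i i') => h.
- by rewrite lt_eqF // tau2_lt.
- by rewrite gt_eqF // tau2_lt.
- by rewrite h eqxx in ne.
Qed.

Lemma SmTSm (R : realType) N j j' :
  ((Sm R N)^T *m Sm R N) j j' = ((svec R N.+1 j.+1)^T *m svec R N.+1 j'.+1) 0 0.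
Proof. rewrite !mxE; apply: eq_bigr => k _; rewrite !mxE //. Qed.

Lemma CmTCm (R : realType) N j j' :
  ((Cm R N)^T *m Cm R N) j j' = ((cvec R N.+1 j)^T *m cvec R N.+1 j') 0 0.
Proof. rewrite !mxE; apply: eq_bigr => k _; rewrite !mxE //. Qed.

Lemma dot_pos (R : realType) p (v : 'cV[R]_p) (k0 : 'I_p) : 0 < v k0 0 ->
  0 < (v^T *m v) 0 0.
Proof.
move=> h; rewrite mxE (bigD1 k0) //= mxE.
have h2 : 0 <= \sum_(i < p | i != k0) v^T 0 i * v i 0.
  apply: sumr_ge0 => i _; rewrite mxE; nra.
nra.
Qed.

Lemma Sm_unit (R : realType) N : Sm R N \in unitmx.
Proof.
apply: unit_of_orth => [j j' ne|j].
  rewrite SmTSm s_orth ?mxE //.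
  by apply: tau2_neq => //; exact: ltn_ord.
rewrite SmTSm gt_eqF //; apply: (@dot_pos _ _ _ (Ordinal (leq_ltn_trans (leq0n _) (ltn_ord j)))).
apply: svec_pos => //; exact: ltn_ord.
Qed.

Lemma Cm_unit (R : realType) N : Cm R N \in unitmx.
Proof.
apply: unit_of_orth => [j j' ne|j].
  rewrite CmTCm c_orth ?mxE //.
  exact: tau2_neq.
rewrite CmTCm gt_eqF //; apply: (@dot_pos _ _ _ ord0).
exact: cvec_pos.
Qed.


Lemma outer_sum (R : comPzRingType) p q p' q' (C : 'M[R]_(p,p')) (P : 'M[R]_(p',q'))
  (S : 'M[R]_(q,q')) :
  C *m P *m S^T = \sum_i \sum_j P i j *: (col i C *m (col j S)^T).
Proof.
apply/matrixP => r t.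
have -> : (C *m P *m S^T) r t = \sum_j \sum_i C r i * P i j * S t j.
  rewrite mxE; apply: eq_bigr => j _; rewrite !mxE big_distrl /=.
  by [].
rewrite summxE exchange_big; apply: eq_bigr => i _; rewrite summxE.
by apply: eq_bigr => j _; rewrite !mxE big_ord1 !mxE; ring.
Qed.

Lemma col_Cm (R : realType) N i : col i (Cm R N) = cvec R N.+1 i.
Proof. by apply/matrixP => k z; rewrite !mxE. Qed.

Lemma col_Sm (R : realType) N j : col j (Sm R N) = svec R N.+1 j.+1.
Proof. by apply/matrixP => k z; rewrite !mxE. Qed.

Lemma outerU (R : realType) N (P : 'M[R]_(N.+1, N)) :
  Cm R N *m P *m (Sm R N)^T = \sum_i \sum_j P i j *: (cvec R N.+1 i *m (svec R N.+1 j.+1)^T).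
Proof.
rewrite outer_sum; apply: eq_bigr => i _; apply: eq_bigr => j _.
by rewrite col_Cm col_Sm.
Qed.

Lemma outerV (R : realType) N (Q : 'M[R]_(N, N.+1)) :
  Sm R N *m Q *m (Cm R N)^T = \sum_i \sum_j Q i j *: (svec R N.+1 i.+1 *m (cvec R N.+1 j)^T).
Proof.
rewrite outer_sum; apply: eq_bigr => i _; apply: eq_bigr => j _.
by rewrite col_Cm col_Sm.
Qed.

Definition PU (R : realType) N (a : Idx N.+1 -> R) : 'M[R]_(N.+1, N) :=
  \matrix_(i, j) (a (inl (i, lift ord0 j)) * (tau R N.+1 j.+1 * sigma R N.+1 i) +
     oapp (fun i' => a (inr (i', j)) * tau R N.+1 i) 0 (unlift ord0 i)).

Lemma SU_eq (R : realType) N (a : Idx N.+1 -> R) :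
  \sum_(k | @idx_ok N.+1 k) a k *: @Ufam R N.+1 k = Cm R N *m PU R N a *m (Sm R N)^T.
Proof.
rewrite outerU.
rewrite big_sumType /=.
have -> : \sum_(p : 'I_N.+1 * 'I_N.+1 | (p.1 != 0%N :> nat) || (p.2 != 0%N :> nat)) a (inl p) *: U_ij R N.+1 p.1 p.2
   = \sum_(i < N.+1) \sum_(j < N.+1) a (inl (i, j)) *: U_ij R N.+1 i j.
  rewrite pair_bigA /=.
  rewrite [RHS](bigID (fun p : 'I_N.+1 * 'I_N.+1 => (p.1 != 0%N :> nat) || (p.2 != 0%N :> nat))) /=.
  rewrite [X in _ = _ + X]big1 ?addr0; last first.
    move=> p; rewrite negb_or !negbK => /andP[_ /eqP h].
    by rewrite /U_ij h svec0 tau0 mul0r !scale0r scaler0.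
  by apply: eq_bigr => -[i j].
have -> : \sum_(p : 'I_N * 'I_N) a (inr p) *: U0_ij R N.+1 p.1.+1 p.2.+1
   = \sum_(i < N) \sum_(j < N) a (inr (i, j)) *: U0_ij R N.+1 i.+1 j.+1.
  by rewrite pair_bigA /=; apply: eq_bigr => -[i j].
under [X in _ = X]eq_bigr => i _ do under eq_bigr => j _ do rewrite mxE scalerDl.
under [X in _ = X]eq_bigr => i _ do rewrite big_split.
rewrite big_split /=; congr (_ + _).
  apply: eq_bigr => i _; rewrite big_ord_recl /U_ij svec0 tau0 mul0r !scale0r scaler0 add0r.
  by apply: eq_bigr => j _; rewrite lift0 scalerA.
rewrite big_ord_recl unlift_none [X in _ = X + _]big1 ?add0r; last by move=> j _; rewrite scale0r.
apply: eq_bigr => i _; rewrite liftK /=; apply: eq_bigr => j _.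
by rewrite /U0_ij scalerA.
Qed.

Definition PV (R : realType) N (a : Idx N.+1 -> R) : 'M[R]_(N, N.+1) :=
  \matrix_(i, j) (a (inl (lift ord0 i, j)) * (- (tau R N.+1 i.+1 * sigma R N.+1 j)) +
     oapp (fun j' => a (inr (i, j')) * tau R N.+1 j) 0 (unlift ord0 j)).

Lemma SV_eq (R : realType) N (a : Idx N.+1 -> R) :
  \sum_(k | @idx_ok N.+1 k) a k *: @Vfam R N.+1 k = Sm R N *m PV R N a *m (Cm R N)^T.
Proof.
rewrite outerV big_sumType /=.
have -> : \sum_(p : 'I_N.+1 * 'I_N.+1 | (p.1 != 0%N :> nat) || (p.2 != 0%N :> nat)) a (inl p) *: V_ij R N.+1 p.1 p.2
   = \sum_(i < N.+1) \sum_(j < N.+1) a (inl (i, j)) *: V_ij R N.+1 i j.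
  rewrite pair_bigA /=.
  rewrite [RHS](bigID (fun p : 'I_N.+1 * 'I_N.+1 => (p.1 != 0%N :> nat) || (p.2 != 0%N :> nat))) /=.
  rewrite [X in _ = _ + X]big1 ?addr0; last first.
    move=> p; rewrite negb_or !negbK => /andP[/eqP h _].
    by rewrite /V_ij h tau0 mul0r oppr0 scale0r scaler0.
  by apply: eq_bigr => -[i j].
have -> : \sum_(p : 'I_N * 'I_N) a (inr p) *: V0_ij R N.+1 p.1.+1 p.2.+1
   = \sum_(i < N) \sum_(j < N) a (inr (i, j)) *: V0_ij R N.+1 i.+1 j.+1.
  by rewrite pair_bigA /=; apply: eq_bigr => -[i j].
under [X in _ = X]eq_bigr => i _ do under eq_bigr => j _ do rewrite mxE scalerDl.
under [X in _ = X]eq_bigr => i _ do rewrite big_split.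
rewrite big_split /=; congr (_ + _).
  rewrite big_ord_recl [X in X + _]big1 ?add0r; last first.
    by move=> j _; rewrite /V_ij svec0 tau0 mul0r oppr0 !scale0r scaler0.
  by apply: eq_bigr => i _; apply: eq_bigr => j _; rewrite /V_ij lift0 scalerA.
apply: eq_bigr => i _.
rewrite big_ord_recl unlift_none [X in _ = X + _]scale0r add0r.
by apply: eq_bigr => j _; rewrite liftK /V0_ij scalerA.
Qed.


Lemma mx_cancel0 (R : comUnitRingType) p q (C : 'M[R]_p) (S : 'M[R]_q) (P : 'M[R]_(p, q)) :
  C \in unitmx -> S \in unitmx -> C *m P *m S = 0 -> P = 0.
Proof.
move=> hC hS h.
by rewrite -[P](mulKmx hC) -[C *m P](mulmxK hS) h mul0mx mulmx0.
Qed.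

Lemma mx_expand (R : comUnitRingType) p q (C : 'M[R]_p) (S : 'M[R]_q) (U : 'M[R]_(p, q)) :
  C \in unitmx -> S \in unitmx -> U = C *m (invmx C *m U *m invmx S) *m S.
Proof.
move=> hC hS.
by rewrite -mulmxA mulmxKV // mulKVmx.
Qed.

Lemma outer_entry (R : comPzRingType) p q (a : R) (u : 'cV[R]_p) (v : 'cV[R]_q) k l :
  (a *: (u *m v^T)) k l = a * (u k 0 * v l 0).
Proof. by rewrite !mxE big_ord1 !mxE. Qed.

Lemma outer_neq0 (R : realType) p q (a : R) (u : 'cV[R]_p) (v : 'cV[R]_q) k l :
  a != 0 -> 0 < u k 0 -> 0 < v l 0 -> a *: (u *m v^T) != 0.
Proof.
move=> ha hu hv; apply/eqP => h.
have := congr1 (fun M : 'M[R]_(p, q) => M k l) h; rewrite outer_entry mxE => /eqP.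
by rewrite !mulf_eq0 (negbTE ha) !gt_eqF.
Qed.

Lemma solve2 (R : realType) (x y p q si sj : R) : p != 0 -> q != 0 -> 0 < si -> 0 < sj ->
  x * (p * si) + y * q = 0 -> x * (- (q * sj)) + y * p = 0 -> x = 0 /\ y = 0.
Proof.
move=> hp hq hsi hsj e1 e2.
have h1 : 0 < p ^+ 2 * si by rewrite mulr_gt0 // exprn_even_gt0.
have h2 : 0 < q ^+ 2 * sj by rewrite mulr_gt0 // exprn_even_gt0.
have hD : p ^+ 2 * si + q ^+ 2 * sj != 0 by rewrite gt_eqF //; lra.
have ex : x * (p ^+ 2 * si + q ^+ 2 * sj) = 0.
  transitivity (p * (x * (p * si) + y * q) - q * (x * (- (q * sj)) + y * p)); first by ring.
  by rewrite e1 e2; ring.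
have x0 : x = 0 by move/eqP: ex; rewrite mulf_eq0 (negbTE hD) orbF => /eqP.
split => //; move: e1; rewrite x0 mul0r add0r => /eqP; rewrite mulf_eq0 (negbTE hq) orbF.
by move/eqP.
Qed.

Lemma bump0 (m : nat) : bump 0 m = m.+1.
Proof. by []. Qed.

Lemma sol_check1 (R : realType) (tI tJ sI sJ p q : R) :
  tJ ^+ 2 * sI + tI ^+ 2 * sJ != 0 ->
  (tJ * p - tI * q) / (tJ ^+ 2 * sI + tI ^+ 2 * sJ) * (tJ * sI) +
  (tI * sJ * p + tJ * sI * q) / (tJ ^+ 2 * sI + tI ^+ 2 * sJ) * tI = p.
Proof. by move=> h; field. Qed.

Lemma sol_check2 (R : realType) (tI tJ sI sJ p q : R) :
  tJ ^+ 2 * sI + tI ^+ 2 * sJ != 0 ->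
  (tJ * p - tI * q) / (tJ ^+ 2 * sI + tI ^+ 2 * sJ) * (- (tI * sJ)) +
  (tI * sJ * p + tJ * sI * q) / (tJ ^+ 2 * sI + tI ^+ 2 * sJ) * tJ = q.
Proof. by move=> h; field. Qed.

Definition Delta (R : realType) N (i' j' : nat) : R :=
  tau R N.+1 j'.+1 ^+ 2 * sigma R N.+1 i'.+1 + tau R N.+1 i'.+1 ^+ 2 * sigma R N.+1 j'.+1.

Lemma Delta_neq0 (R : realType) N (i' j' : 'I_N) : Delta R N i' j' != 0.
Proof.
have hi : tau R N.+1 i'.+1 != 0 by apply: tau_neq0 => //; exact: ltn_ord.
have hj : tau R N.+1 j'.+1 != 0 by apply: tau_neq0 => //; exact: ltn_ord.
have h1 : 0 < tau R N.+1 j'.+1 ^+ 2 * sigma R N.+1 i'.+1 by rewrite mulr_gt0 ?sigma_gt0 // exprn_even_gt0.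
have h2 : 0 < tau R N.+1 i'.+1 ^+ 2 * sigma R N.+1 j'.+1 by rewrite mulr_gt0 ?sigma_gt0 // exprn_even_gt0.
rewrite /Delta gt_eqF //; lra.
Qed.

Definition acoef (R : realType) N (P : 'M[R]_(N.+1, N)) (Q : 'M[R]_(N, N.+1)) (k : Idx N.+1) : R :=
  match k with
  | inl p => match unlift ord0 p.1, unlift ord0 p.2 with
      | None, None => 0
      | None, Some j' => P ord0 j' / (tau R N.+1 j'.+1 * sigma R N.+1 0)
      | Some i', None => Q i' ord0 / (- (tau R N.+1 i'.+1 * sigma R N.+1 0))
      | Some i', Some j' => (tau R N.+1 j'.+1 * P (lift ord0 i') j' - tau R N.+1 i'.+1 * Q i' (lift ord0 j')) / Delta R N i' j'
      end
  | inr p => (tau R N.+1 p.1.+1 * sigma R N.+1 p.2.+1 * P (lift ord0 p.1) p.2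
             + tau R N.+1 p.2.+1 * sigma R N.+1 p.1.+1 * Q p.1 (lift ord0 p.2)) / Delta R N p.1 p.2
  end.

Lemma PU_acoef (R : realType) N (P : 'M[R]_(N.+1, N)) (Q : 'M[R]_(N, N.+1)) :
  PU R N (acoef R N P Q) = P.
Proof.
apply/matrixP => i j; rewrite mxE.
have hj : tau R N.+1 j.+1 != 0 by apply: tau_neq0 => //; exact: ltn_ord.
have sj := sigma_neq0 R N.+1 j.+1.
case: (unliftP ord0 i) => [i'|] -> /=.
  rewrite !liftK /= !bump0.
  have hi : tau R N.+1 i'.+1 != 0 by apply: tau_neq0 => //; exact: ltn_ord.
  have si := sigma_neq0 R N.+1 i'.+1.
  have hD := Delta_neq0 R N i' j.
  exact: sol_check1.
rewrite unlift_none liftK /= addr0.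
have s0 := sigma_neq0 R N.+1 0.
by field; rewrite s0 hj.
Qed.

Lemma PV_acoef (R : realType) N (P : 'M[R]_(N.+1, N)) (Q : 'M[R]_(N, N.+1)) :
  PV R N (acoef R N P Q) = Q.
Proof.
apply/matrixP => i j; rewrite mxE.
have hi : tau R N.+1 i.+1 != 0 by apply: tau_neq0 => //; exact: ltn_ord.
have si := sigma_neq0 R N.+1 i.+1.
case: (unliftP ord0 j) => [j'|] -> /=.
  rewrite !liftK /= !bump0.
  have hj : tau R N.+1 j'.+1 != 0 by apply: tau_neq0 => //; exact: ltn_ord.
  have hD := Delta_neq0 R N i j'.
  exact: sol_check2.
rewrite unlift_none liftK /= addr0.
have s0 := sigma_neq0 R N.+1 0.
by field; rewrite s0 hi.
Qed.

Theorem theorem3p1 (R : realType) (n : nat) (hn : (2 <= n)%N) :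
  (forall i j : 'I_n, ((i : nat) != 0%N) || ((j : nat) != 0%N) ->
     is_eigsol (lam_ij R n i j) (U_ij R n i j) (V_ij R n i j) /\
     div_free (U_ij R n i j) (V_ij R n i j)) /\
  (forall i j : 'I_(n.-1),
     is_eigsol 0 (U0_ij R n i.+1 j.+1) (V0_ij R n i.+1 j.+1)) /\
  is_basis_pairs (@idx_ok n) (@Ufam R n) (@Vfam R n).
Proof.
case: n hn => [|[|N]] hn //.
have hnz : 2 + N%:R != 0 :> R.
  by rewrite (_ : 2 + N%:R = N.+2%:R) ?pnatr_eq0 // -(addn2 N) natrD addrC.
split; [|split].
- move=> i j hij.
  have si := sigma_neq0 R N.+2 i; have sj := sigma_neq0 R N.+2 j.
  split; [split; [|split]|].
  + have [j0|jn0] := eqVneq (j : nat) 0%N.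
      have i0 : (0 < i)%N by move: hij; rewrite j0 orbF; case: (i : nat).
      right; rewrite /V_ij.
      apply: (@outer_neq0 _ _ _ _ _ _ ord0 ord0).
      * by rewrite oppr_eq0 mulf_neq0 // tau_neq0.
      * exact: svec_pos.
      * exact: cvec_pos.
    left; rewrite /U_ij.
    apply: (@outer_neq0 _ _ _ _ _ _ ord0 ord0).
    * by rewrite mulf_neq0 // tau_neq0 // lt0n.
    * exact: cvec_pos.
    * by apply: svec_pos => //; rewrite lt0n.
  + rewrite /U_ij /V_ij eq1 eqD1 scalerA; congr (_ *: _).
    by rewrite /lam_ij /hstep; field; rewrite si sj hnz.
  + rewrite /U_ij /V_ij eq2 eqD2 scalerA; congr (_ *: _).
    by rewrite /lam_ij /hstep; field; rewrite si sj hnz.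
  + rewrite /div_free /U_ij /V_ij eqdiv.
    by rewrite (_ : _ + _ = 0) ?scale0r //; ring.
- move=> i j.
  have hi : (i.+1 < N.+2)%N by rewrite ltnS ltn_ord.
  have hj : (j.+1 < N.+2)%N by rewrite ltnS ltn_ord.
  split; [|split].
  + left; rewrite /U0_ij.
    apply: (@outer_neq0 _ _ _ _ _ _ ord0 ord0).
    * by rewrite tau_neq0.
    * exact: cvec_pos.
    * exact: svec_pos.
  + rewrite /U0_ij /V0_ij eq1 mulr0 !scale0r.
    by rewrite (_ : _ - _ = 0) ?scale0r //; ring.
  + rewrite /U0_ij /V0_ij eq2 mulr0 !scale0r.
    by rewrite (_ : _ - _ = 0) ?scale0r //; ring.
have hC := Cm_unit R N.+1; have hS := Sm_unit R N.+1.
have hCT : (Cm R N.+1)^T \in unitmx by rewrite unitmx_tr.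
have hST : (Sm R N.+1)^T \in unitmx by rewrite unitmx_tr.
split.
- move=> a hU hV k hk.
  rewrite SU_eq in hU; rewrite SV_eq in hV.
  have PU0 := @mx_cancel0 _ _ _ _ _ _ hC hST hU.
  have PV0 := @mx_cancel0 _ _ _ _ _ _ hS hCT hV.
  have eU i j : PU R N.+1 a i j = 0 by rewrite PU0 mxE.
  have eV i j : PV R N.+1 a i j = 0 by rewrite PV0 mxE.
  have key (i' j' : 'I_N.+1) : a (inl (lift ord0 i', lift ord0 j')) = 0 /\ a (inr (i', j')) = 0.
    have e1 := eU (lift ord0 i') j'; have e2 := eV i' (lift ord0 j').
    rewrite !mxE !liftK /= !bump0 in e1 e2.
    apply: (@solve2 R _ _ _ _ _ _ _ _ _ _ e1 e2).
    - by apply: tau_neq0 => //; rewrite ltnS ltn_ord.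
    - by apply: tau_neq0 => //; rewrite ltnS ltn_ord.
    - exact: sigma_gt0.
    - exact: sigma_gt0.
  case: k hk => [[i j]|[i j]] hk; last by case: (key i j).
  case: (unliftP ord0 i) => [i'|] Ei; case: (unliftP ord0 j) => [j'|] Ej; rewrite Ei Ej.
  + by case: (key i' j').
  + have e2 := eV i' ord0; rewrite !mxE unlift_none /= addr0 in e2.
    have ht : tau R N.+2 i'.+1 != 0 by apply: tau_neq0 => //; rewrite ltnS ltn_ord.
    have s0 := sigma_neq0 R N.+2 0.
    by move/eqP: e2; rewrite mulf_eq0 oppr_eq0 mulf_eq0 (negbTE ht) (negbTE s0) !orbF => /eqP.
  + have e1 := eU ord0 j'; rewrite !mxE unlift_none /= addr0 in e1.
    have ht : tau R N.+2 j'.+1 != 0 by apply: tau_neq0 => //; rewrite ltnS ltn_ord.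
    have s0 := sigma_neq0 R N.+2 0.
    by move/eqP: e1; rewrite mulf_eq0 mulf_eq0 (negbTE ht) (negbTE s0) !orbF => /eqP.
  + by move: hk; rewrite Ei Ej.
- move=> U1 V1.
  exists (acoef R N.+1 (invmx (Cm R N.+1) *m U1 *m invmx (Sm R N.+1)^T)
                       (invmx (Sm R N.+1) *m V1 *m invmx (Cm R N.+1)^T)).
  split.
  + by rewrite SU_eq PU_acoef; exact: mx_expand.
  + by rewrite SV_eq PV_acoef; exact: mx_expand.
Qed.
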